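(* Let $w\geqslant2$ and $h=2^d$ with $d\in\mathbb{N}$. Then $r(\mathcal{H}_{h,w})=h$, where $\mathcal{H}_{h,w}$ is the set of fast Hough transform patterns on the $h\times w$ image.
   Context: Image: the set $I$ of $wh$ pixels $p_{ij}$, $i=0,\dots,h-1$ (row, counted from the bottom), $j=0,\dots,w-1$ (column). A pattern is a nonempty subset of $I$; a pattern set is a nonempty set of distinct patterns. For a pattern set $\mathcal{T}$, its intersection area is $S(\mathcal{T})=|\mathcal{T}|\cdot\bigl|\bigcap_{T\in\mathcal{T}}T\bigr|$ and its self-intersection measure is $r(\mathcal{T})=\max_{\varnothing\neq\mathcal{R}\subseteq\mathcal{T}}S(\mathcal{R})$. FHT patterns: for a pattern $T$ containing exactly one pixel in each of its rows, let $\Delta(T)=(j_{top}-j_{bot})\bmod w$, where $j_{top},j_{bot}$ are the column indices of the topmost and bottommost pixels of $T$, and let $\mathit{tran}_{a,b}(T)=\{p_{i+a,\,(j+b)\bmod w}\mid p_{ij}\in T\}$. Define $\mathcal{H}_0=\{\{p_{00}\},\{p_{01}\},\dots,\{p_{0,w-1}\}\}$ and, for $k=1,\dots,d$, $\mathcal{H}_k=\{T\cup\mathit{tran}_{2^{k-1},\,\Delta(T)+s}(T)\mid T\in\mathcal{H}_{k-1},\ s\in\{0,1\}\}$; $\mathcal{H}_{h,w}=\mathcal{H}_d$. *)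

(* Defs.v *)
From mathcomp Require Import all_boot.
Set Implicit Arguments. Unset Strict Implicit. Unset Printing Implicit Defensive.

Section FHT.
Variables h w : nat.

(* pixel p_{ij}: row i (from the bottom), column j *)
Definition pixel := ('I_h * 'I_w)%type.
Definition pattern := {set pixel}.

Definition tran (a b : nat) (T : pattern) : pattern :=
  [set p : pixel | [exists q in T, (q.1 + a == p.1 :> nat) && ((q.2 + b) %% w == p.2 :> nat)]].

Definition top_pix (T : pattern) : option pixel :=
  [pick p in T | [forall q in T, (q.1 <= p.1)%N]].
Definition bot_pix (T : pattern) : option pixel :=
  [pick p in T | [forall q in T, (p.1 <= q.1)%N]].
Definition jtop (T : pattern) : nat := odflt 0 (omap (fun p : pixel => val p.2) (top_pix T)).
Definition jbot (T : pattern) : nat := odflt 0 (omap (fun p : pixel => val p.2) (bot_pix T)).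

Definition Delta (T : pattern) : nat := (jtop T + w - jbot T) %% w.

Fixpoint FHT (k : nat) : {set pattern} :=
  match k with
  | 0 => [set [set p : pixel | (p.1 == 0 :> nat) && (p.2 == j)] | j : 'I_w]
  | k'.+1 => [set T :|: tran (2 ^ k') (Delta T + nat_of_bool s) T
               | T in FHT k', s in [set: bool]]
  end.

Definition Sarea (R : {set pattern}) : nat := #|R| * #|\bigcap_(T in R) T|.
Definition rself (TT : {set pattern}) : nat :=
  \max_(R in powerset TT | R != set0) Sarea R.

End FHT.

Definition Hhw (d w : nat) : {set pattern (2 ^ d) w} := FHT (2 ^ d) w d.

(* Main.v *)
Require Import Defs.
From mathcomp Require Import all_boot zify.
Set Implicit Arguments. Unset Strict Implicit. Unset Printing Implicit Defensive.

Section Proof.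
Variables d w : nat.
Hypothesis w2 : 1 < w.
Local Notation N := (2 ^ d).
Local Notation pix := (pixel N w).
Local Notation pat := (pattern N w).

Lemma w0 : 0 < w. Proof. by apply: ltnW. Qed.

Lemma pix_eq (p q : pix) : p.1 = q.1 :> nat -> p.2 = q.2 :> nat -> p = q.
Proof. by case: p q => [? ?] [? ?] /= /val_inj-> /val_inj->. Qed.

Lemma tranP a b (T : pat) (p : pix) : reflect (exists2 q : pix, q \in T &
   (q.1 + a = p.1 :> nat) /\ ((q.2 + b) %% w = p.2 :> nat)) (p \in tran a b T).
Proof.
rewrite inE; apply: (iffP existsP) => [[q /andP[qT /andP[/eqP e1 /eqP e2]]]|[q qT [e1 e2]]]; exists q => //.
by rewrite qT e1 e2 !eqxx.
Qed.

Lemma tran_mk a b (T : pat) (q : pix) : q \in T -> q.1 + a < N ->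
  exists2 p : pix, p \in tran a b T & (p.1 = q.1 + a :> nat) /\ (p.2 = (q.2 + b) %% w :> nat).
Proof.
move=> qT lt.
exists (Ordinal lt, Ordinal (ltn_pmod (q.2 + b) w0)) => //.
by apply/tranP; exists q.
Qed.

Lemma tranC a b a' b' (T : pat) : tran a b (tran a' b' T) = tran (a' + a) (b' + b) T.
Proof.
apply/setP => p; apply/tranP/tranP.
- case=> q' /tranP [q qT [e1 e2]] [e3 e4].
  by exists q => //; rewrite -e3 -e4 -e1 -e2 addnA modnDml addnA; split.
- case=> q qT [e1 e2].
  have lt : q.1 + a' < N by move: (ltn_ord p.1); rewrite -e1; lia.
  case: (tran_mk b' qT lt) => q' q'T [f1 f2].
  by exists q' => //; rewrite f1 f2 modnDml -!addnA e1 e2.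
Qed.

Lemma tranU a b (A B : pat) : tran a b (A :|: B) = tran a b A :|: tran a b B.
Proof.
apply/setP => p; rewrite in_setU; apply/tranP/orP.
- case=> q; rewrite in_setU => /orP[qA|qB] e; [left|right]; apply/tranP; by exists q.
- by case=> /tranP[q qA e]; exists q => //; rewrite inE ?qA ?orbT.
Qed.

Lemma tran_mod a b (T : pat) : tran a b T = tran a (b %% w) T.
Proof.
by apply/setP => p; apply/tranP/tranP => -[q qT [e1 e2]]; exists q => //; rewrite ?modnDmr // -modnDmr.
Qed.

Lemma tran00 (T : pat) : tran 0 0 T = T.
Proof.
apply/setP => p; apply/tranP/idP.
- case=> q qT [e1 e2].
  have pq : p = q by apply: pix_eq; rewrite -?e1 -?e2 ?addn0 ?modn_small.
  by rewrite pq.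
- by move=> pT; exists p => //; rewrite !addn0 modn_small.
Qed.

Lemma rot_inj c (A B : pat) : tran 0 c A = tran 0 c B -> A = B.
Proof.
move=> e.
have key : forall T : pat, tran 0 (w - c %% w) (tran 0 c T) = T.
  move=> T; rewrite tranC addn0 tran_mod.
  have -> : (c + (w - c %% w)) %% w = 0; last by rewrite tran00.
  rewrite -modnDml subnKC ?modnn //; apply: ltnW; exact: ltn_pmod w0.
by rewrite -(key A) e key.
Qed.


Definition inv k (T : pat) := [/\ forall p : pix, p \in T -> p.1 < 2^k,
  forall p q : pix, p \in T -> q \in T -> p.1 = q.1 :> nat -> p = q &
  forall i : 'I_N, i < 2^k -> exists2 p : pix, p \in T & p.1 = i].

Definition Lo a (T : pat) : pat := [set p in T | p.1 < a].
Definition dn a (T : pat) : pat :=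
  [set p : pix | [exists q in T, (q.1 == p.1 + a :> nat) && (q.2 == p.2)]].

Lemma dnP a (T : pat) (p : pix) : reflect (exists2 q : pix, q \in T &
   (q.1 = p.1 + a :> nat) /\ (q.2 = p.2)) (p \in dn a T).
Proof.
rewrite inE; apply: (iffP existsP) => [[q /andP[qT /andP[/eqP e1 /eqP e2]]]|[q qT [e1 e2]]]; exists q => //.
by rewrite qT e1 e2 !eqxx.
Qed.

Lemma pow_le k : k <= d -> 2^k <= N.
Proof. by move=> h; apply: leq_pexp2l. Qed.

Lemma inv_FHT k : k <= d -> forall T, T \in FHT N w k -> inv k T.
Proof.
elim: k => [|k IH] hk T.
- case/imsetP => j _ ->; split.
  + by move=> p; rewrite inE => /andP[/eqP -> _].
  + move=> p q; rewrite !inE => /andP[/eqP e1 /eqP e2] /andP[/eqP f1 /eqP f2] _.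
    by apply: pix_eq; rewrite ?e1 ?f1 ?e2 ?f2.
  + move=> i; rewrite expn0 ltnS leqn0 => /eqP i0.
    by exists (i, j); rewrite ?inE /= ?i0 ?eqxx.
- case/imset2P => A s AH _ ->.
  have hk' : k <= d by apply: ltnW.
  have [r1 r2 r3] := IH hk' A AH; clear IH AH.
  have le : 2^k.+1 <= N := pow_le hk.
  rewrite /inv expnS in le *.
  split.
  + move=> p; rewrite in_setU => /orP[/r1|/tranP[q /r1 qa [e _]]].
  move=> h; lia. lia.
  + move=> p q; rewrite !in_setU => /orP[pA|/tranP[p' p'A [e1 e2]]]
       /orP[qA|/tranP[q' q'A [f1 f2]]] e.
    * exact: r2.
    * have := r1 _ pA; lia.
    * have := r1 _ qA; lia.
    * have pq : p' = q' by apply: r2 => //; lia.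
      by apply: pix_eq => //; rewrite -e2 -f2 pq.
  + move=> i hi; case: (ltnP i (2^k)) => hik.
    * by have [p pA pe] := r3 i hik; exists p; rewrite // in_setU pA.
    * have hi' : i - 2^k < N by have := ltn_ord i; lia.
      have hlt : Ordinal hi' < 2^k by rewrite /=; lia.
      have [q qA qe] := r3 (Ordinal hi') hlt.
      have lt : q.1 + 2^k < N by rewrite qe /=; have := ltn_ord i; lia.
      have [p pT [pe _]] := tran_mk (Delta A + s) qA lt.
      exists p; first by rewrite in_setU pT orbT.
      apply: val_inj; rewrite /= pe qe /=; lia.
Qed.

Lemma Lo_dec k A b : inv k A -> Lo (2^k) (A :|: tran (2^k) b A) = A.
Proof.
case=> r1 _ _; apply/setP => p; rewrite /Lo in_set in_setU; case pA: (p \in A) => /=.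
  by rewrite (r1 _ pA).
apply/negbTE/andP => -[/tranP[q _ [e _]]]; lia.
Qed.

Lemma dn_dec k A b : k.+1 <= d -> inv k A -> dn (2^k) (A :|: tran (2^k) b A) = tran 0 b A.
Proof.
move=> hk [r1 r2 r3]; have le : 2^k.+1 <= N := pow_le hk.
rewrite expnS in le.
apply/setP => p; apply/dnP/tranP.
- case=> q; rewrite in_setU => /orP[qA|/tranP[q' q'A [e1 e2]]] [f1 f2].
  + have := r1 _ qA; lia.
  + exists q' => //; rewrite addn0 e2 f2; split => //; lia.
- case=> q qA [e1 e2]; rewrite addn0 in e1.
  have lt : q.1 + 2^k < N by have := r1 _ qA; lia.
  have [q' q'T [g1 g2]] := tran_mk b qA lt.
  exists q'; first by rewrite in_setU q'T orbT.
  by split; [rewrite g1 e1 | apply: val_inj; rewrite /= g2 e2].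
Qed.

Lemma recompose k A b : k.+1 <= d -> inv k A ->
  A :|: tran (2^k) b A = Lo (2^k) (A :|: tran (2^k) b A) :|:
     tran (2^k) 0 (dn (2^k) (A :|: tran (2^k) b A)).
Proof. by move=> hk iA; rewrite Lo_dec // dn_dec // tranC add0n addn0. Qed.

Lemma jtop_eq k A (p : pix) : inv k A -> p \in A -> p.1 = (2^k).-1 :> nat -> jtop A = p.2.
Proof.
case=> r1 r2 _ pA pe; have k0 : 0 < 2^k by rewrite expn_gt0.
rewrite /jtop /top_pix; case: pickP => [q /andP[qA /forall_inP H]|H] /=.
- have h2 : (p.1 <= (q : pix).1)%N := H p pA.
  have h1 : ((q : pix).1 < 2^k)%N := r1 q qA.
  have pq : q = p by apply: r2 => //; lia.
  by rewrite pq.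
- have := H p; rewrite pA /= => /negbT/forall_inPn [q qA hq].
  have hq' : ~~ ((q : pix).1 <= p.1)%N := hq.
  have h1 : ((q : pix).1 < 2^k)%N := r1 q qA.
  rewrite -ltnNge in hq'; lia.
Qed.

Lemma jbot_eq k A (p : pix) : inv k A -> p \in A -> p.1 = 0 :> nat -> jbot A = p.2.
Proof.
case=> r1 r2 _ pA pe.
rewrite /jbot /bot_pix; case: pickP => [q /andP[qA /forall_inP H]|H] /=.
- have h2 : ((q : pix).1 <= p.1)%N := H p pA.
  have pq : q = p by apply: r2 => //; lia.
  by rewrite pq.
- have := H p; rewrite pA /= => /negbT/forall_inPn [q qA hq].
  have hq' : ~~ (p.1 <= (q : pix).1)%N := hq.
  rewrite -ltnNge in hq'; lia.
Qed.

Lemma inv_rot k A c : inv k A -> inv k (tran 0 c A).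
Proof.
case=> r1 r2 r3; split.
- by move=> p /tranP[q /r1 qa [e _]]; lia.
- move=> p p' /tranP[q qA [e1 e2]] /tranP[q' q'A [f1 f2]] e.
  have qq : q = q' by apply: r2 => //; lia.
  by apply: pix_eq => //; rewrite -e2 -f2 qq.
- move=> i hi; have [q qA qe] := r3 i hi.
  have lt : q.1 + 0 < N by rewrite addn0.
  have [p pT [pe _]] := tran_mk c qA lt.
  by exists p => //; apply: val_inj; rewrite /= pe addn0 qe.
Qed.

Lemma modarith x y c : x < w -> y < w ->
  ((x + c) %% w + w - (y + c) %% w) %% w = (x + w - y) %% w.
Proof.
move=> xw yw; apply/eqP.
set r := (y + c) %% w; have rw : r < w := ltn_pmod _ w0.
rewrite -(eqn_modDr r).
have -> : (x + c) %% w + w - r + r = (x + c) %% w + w by rewrite subnK //; lia.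
rewrite modnDr modn_mod /r modnDmr.
have -> : x + w - y + (y + c) = (x + c) + w by lia.
by rewrite modnDr.
Qed.

Lemma Delta_rot k A c : k <= d -> inv k A -> Delta (tran 0 c A) = Delta A.
Proof.
move=> hk iA; have iA' := inv_rot c iA.
have k0 : 0 < 2^k by rewrite expn_gt0.
have le := pow_le hk.
have [r1 r2 r3] := iA.
have ht : (2^k).-1 < N by lia.
have hb : 0 < N by lia.
have hlt : Ordinal ht < 2^k by rewrite /=; lia.
have [pt ptA pte] := r3 (Ordinal ht) hlt.
have [pb pbA pbe] := r3 (Ordinal hb) k0.
have hpt : pt.1 + 0 < N by rewrite addn0.
have hpb : pb.1 + 0 < N by rewrite addn0.
have [pt' pt'T [e1 e2]] := tran_mk c ptA hpt.
have [pb' pb'T [f1 f2]] := tran_mk c pbA hpb.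
rewrite /Delta (jtop_eq iA ptA) ?pte // (jbot_eq iA pbA) ?pbe //.
rewrite (jtop_eq iA' pt'T) ?e1 ?addn0 ?pte // (jbot_eq iA' pb'T) ?f1 ?addn0 ?pbe //.
by rewrite e2 f2 modarith.
Qed.

Lemma rot_FHT k : k <= d -> forall c A, A \in FHT N w k -> tran 0 c A \in FHT N w k.
Proof.
elim: k => [|k IH] hk c.
- move=> A /imsetP[j _ ->]; apply/imsetP; exists (Ordinal (ltn_pmod (j + c) w0)) => //.
  apply/setP => p; rewrite [RHS]inE; apply/tranP/andP.
  + case=> q; rewrite inE => /andP[/eqP q1 /eqP q2] [e1 e2].
    split; first by rewrite -e1 addn0 q1.
    by apply/eqP/val_inj; rewrite /= -e2 q2.
  + case=> /eqP p1 /eqP p2; exists (p.1, j); first by rewrite inE /= p1 !eqxx.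
    by rewrite /= addn0 p2.
- move=> A /imset2P[B s BH _ ->].
  have hk' : k <= d by apply: ltnW.
  have iB := inv_FHT hk' BH.
  rewrite tranU tranC addn0.
  apply/imset2P; exists (tran 0 c B) s; [exact: IH | by rewrite inE | ].
  by rewrite tranC add0n (Delta_rot _ hk' iB) [c + _]addnC.
Qed.


Lemma decomp k T : k.+1 <= d -> T \in FHT N w k.+1 -> exists A, exists s : bool,
  [/\ A \in FHT N w k, inv k A, T = A :|: tran (2^k) (Delta A + s) A,
      Lo (2^k) T = A & dn (2^k) T = tran 0 (Delta A + s) A].
Proof.
move=> hk /imset2P[A s AH _ ->].
have iA := inv_FHT (ltnW hk) AH.
exists A, s; split => //; [exact: Lo_dec | exact: dn_dec].
Qed.

Lemma recomp k T : k.+1 <= d -> T \in FHT N w k.+1 ->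
  T = Lo (2^k) T :|: tran (2^k) 0 (dn (2^k) T).
Proof.
move=> hk TH; have [A [s [_ iA eT _ _]]] := decomp hk TH.
by rewrite eT -recompose.
Qed.

Lemma eq_LoDn k T1 T2 : k.+1 <= d -> T1 \in FHT N w k.+1 -> T2 \in FHT N w k.+1 ->
  Lo (2^k) T1 = Lo (2^k) T2 -> dn (2^k) T1 = dn (2^k) T2 -> T1 = T2.
Proof. by move=> hk H1 H2 e1 e2; rewrite (recomp hk H1) (recomp hk H2) e1 e2. Qed.

Lemma s_eq (s1 s2 : bool) D : (D + s1) %% w = (D + s2) %% w -> s1 = s2.
Proof.
move/eqP; rewrite eqn_modDl; case: s1; case: s2 => //=;
  rewrite mod0n modn_small //.
Qed.

Lemma caseB k T1 T2 (p : pix) : k.+1 <= d -> T1 \in FHT N w k.+1 -> T2 \in FHT N w k.+1 ->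
  Lo (2^k) T1 = Lo (2^k) T2 -> p \in T1 -> p \in T2 -> 2^k <= p.1 -> T1 = T2.
Proof.
move=> hk H1 H2 eL p1 p2 pl.
have [A1 [s1 [_ iA1 e1 L1 _]]] := decomp hk H1.
have [A2 [s2 [_ iA2 e2 L2 _]]] := decomp hk H2.
move: eL; rewrite L1 L2 => eA; rewrite -eA in e2.
have [r1 r2 _] := iA1.
move: p1; rewrite e1 in_setU => /orP[/r1 ?|/tranP[q1 q1A [f1 f2]]]; first lia.
move: p2; rewrite e2 in_setU => /orP[/r1 ?|/tranP[q2 q2A [g1 g2]]]; first lia.
have qq : q1 = q2 by apply: r2 => //; lia.
subst q2.
have : (Delta A1 + s1) %% w = (Delta A1 + s2) %% w.
  by apply/eqP; rewrite -(eqn_modDl q1.2); apply/eqP; rewrite f2 g2.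
by move/s_eq => es; rewrite ?e1 ?e2 es.
Qed.

Lemma caseC k T1 T2 (p : pix) : k.+1 <= d -> T1 \in FHT N w k.+1 -> T2 \in FHT N w k.+1 ->
  dn (2^k) T1 = dn (2^k) T2 -> p \in T1 -> p \in T2 -> p.1 < 2^k -> T1 = T2.
Proof.
move=> hk H1 H2 eD p1 p2 pl.
have hk' : k <= d by apply: ltnW.
have [A1 [s1 [_ iA1 e1 L1 D1]]] := decomp hk H1.
have [A2 [s2 [_ iA2 e2 L2 D2]]] := decomp hk H2.
have le := pow_le hk.
rewrite expnS in le.
have pA1 : p \in A1.
  move: p1; rewrite e1 in_setU => /orP[pA|/tranP[q _ [f1 _]]]; [exact: pA | lia].
have pA2 : p \in A2.
  move: p2; rewrite e2 in_setU => /orP[pA|/tranP[q _ [f1 _]]]; [exact: pA | lia].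
rewrite D1 D2 in eD.
have hD : Delta A1 = Delta A2.
  by rewrite -(Delta_rot (Delta A1 + s1) hk' iA1) eD (Delta_rot _ hk' iA2).
rewrite hD in eD.
have hp : p.1 + 0 < N by rewrite addn0.
have [x xT [x1 x2]] := tran_mk (Delta A2 + s1) pA1 hp.
have [y yT [y1 y2]] := tran_mk (Delta A2 + s2) pA2 hp.
rewrite eD in xT.
have [_ rB _] := inv_rot (Delta A2 + s2) iA2.
have xy : x = y by apply: rB => //; rewrite x1 y1.
have : (Delta A2 + s1) %% w = (Delta A2 + s2) %% w.
  by apply/eqP; rewrite -(eqn_modDl p.2); apply/eqP; rewrite -x2 -y2 xy.
move/s_eq => es; rewrite es in eD.
have eA := rot_inj eD.
by rewrite e1 e2 eA ?hD es.
Qed.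

Lemma card_fiber2 (R : {set pat}) (f : pat -> pat) (g : pat -> bool) :
  {in R &, injective (fun T => (f T, g T))} -> #|R| <= 2 * #|f @: R|.
Proof.
move=> inj; rewrite -(card_in_imset inj).
apply: leq_trans (subset_leq_card (_ : _ \subset setX (f @: R) [set: bool])) _.
  by apply/subsetP => x /imsetP[T TR ->]; rewrite in_setX imset_f // inE.
by rewrite cardsX cardsT card_bool mulnC.
Qed.

Lemma injLo k (R : {set pat}) : k.+1 <= d -> R \subset FHT N w k.+1 ->
  {in R &, injective (fun T => (Lo (2^k) T,
     T == Lo (2^k) T :|: tran (2^k) (Delta (Lo (2^k) T)) (Lo (2^k) T)))}.
Proof.
move=> hk sub T1 T2 /(subsetP sub) H1 /(subsetP sub) H2 [eL eg].
have [A1 [s1 [_ iA1 e1 L1 _]]] := decomp hk H1.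
have [A2 [s2 [_ iA2 e2 L2 _]]] := decomp hk H2.
move: eL; rewrite L1 L2 => eA; rewrite -eA in e2.
rewrite e1 e2 in eg *; rewrite !Lo_dec // in eg.
clear e1 e2; case: s1 s2 eg => [] [] //= eg; rewrite ?addn0 ?eqxx in eg *.
- by apply/eqP; rewrite eg.
- by apply/eqP; rewrite eq_sym -eg.
Qed.

Lemma injDn k (R : {set pat}) : k.+1 <= d -> R \subset FHT N w k.+1 ->
  {in R &, injective (fun T => (dn (2^k) T,
     dn (2^k) T == tran 0 (Delta (Lo (2^k) T)) (Lo (2^k) T)))}.
Proof.
move=> hk sub T1 T2 /(subsetP sub) H1 /(subsetP sub) H2 [eD eg].
have hk' : k <= d by apply: ltnW.
apply: (eq_LoDn hk H1 H2) => //.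
have [A1 [s1 [_ iA1 e1 L1 D1]]] := decomp hk H1.
have [A2 [s2 [_ iA2 e2 L2 D2]]] := decomp hk H2.
rewrite L1 L2 D1 D2 in eg *; rewrite D1 D2 in eD.
have hD : Delta A1 = Delta A2.
  by rewrite -(Delta_rot (Delta A1 + s1) hk' iA1) eD (Delta_rot _ hk' iA2).
rewrite hD in eD eg.
clear e1 e2 D1 D2; case: s1 s2 eD eg => [] [] /= eD eg; rewrite ?addn0 ?eqxx in eD eg.
- exact: rot_inj eD.
- move/eqP: eg => eg.
  have e : tran 0 (Delta A2) A1 = tran 0 (Delta A2) A2 by rewrite -eg eD.
  exact: rot_inj e.
- move/esym/eqP: eg => eg.
  have e : tran 0 (Delta A2) A1 = tran 0 (Delta A2) A2 by rewrite eD eg.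
  exact: rot_inj e.
- exact: rot_inj eD.
Qed.


Lemma main k : k <= d -> forall R : {set pat}, R \subset FHT N w k -> R != set0 ->
  #|R| * #|\bigcap_(T in R) T| <= 2^k.
Proof.
elim: k => [|k IH].
  move=> _ R sub nz; rewrite expn0.
  case: (leqP #|R| 1) => hR.
    have [T TR] := set0Pn _ nz.
    have hT : #|T| <= 1.
      have := subsetP sub T TR; case/imsetP => j _ ->.
      apply/card_le1P => x; rewrite inE => /andP[/eqP x1 /eqP x2] y.
      rewrite !inE; apply/andP/eqP => [[/eqP y1 /eqP y2]|->]; last by rewrite x1 x2.
      by apply: pix_eq; rewrite ?x1 ?y1 ?x2 ?y2.
    have hI : #|\bigcap_(T in R) T| <= #|T| := subset_leq_card (bigcap_inf T TR).
    by rewrite -[1]/(1 * 1) leq_mul // (leq_trans hI hT).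
  have [T1 [T2 [T1R T2R ne]]] := card_gt1P hR.
  have -> : #|\bigcap_(T in R) T| = 0; last by rewrite muln0.
  apply/eqP; rewrite cards_eq0; apply/eqP/setP => p; rewrite in_set0.
  apply/negbTE/negP => /bigcapP H.
  have := H T1 T1R; have := H T2 T2R.
  have := subsetP sub T1 T1R; case/imsetP => j1 _ e1.
  have := subsetP sub T2 T2R; case/imsetP => j2 _ e2.
  rewrite e1 e2 !inE => /andP[_ /eqP f2] /andP[_ /eqP f1].
  by move: ne; rewrite e1 e2 -f1 -f2 eqxx.
move=> hk R sub nz.
have hk' : k <= d by apply: ltnW.
have Lsub : Lo (2^k) @: R \subset FHT N w k.
  apply/subsetP => A /imsetP[T TR ->].
  by have [A' [s [A'H _ _ eL _]]] := decomp hk (subsetP sub T TR); rewrite eL.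
have Dsub : dn (2^k) @: R \subset FHT N w k.
  apply/subsetP => A /imsetP[T TR ->].
  have [A' [s [A'H _ _ _ eD]]] := decomp hk (subsetP sub T TR); rewrite eD.
  exact: rot_FHT.
have Lnz : Lo (2^k) @: R != set0 by rewrite imset_eq0.
have Dnz : dn (2^k) @: R != set0 by rewrite imset_eq0.
have IHL := IH hk' _ Lsub Lnz.
have IHD := IH hk' _ Dsub Dnz.
set I := \bigcap_(T in R) T.
set low := [set p : pix | p.1 < 2^k].
have cI : #|I| = #|I :&: low| + #|I :\: low| by rewrite cardsID.
have L1 : #|I :&: low| <= #|\bigcap_(A in Lo (2^k) @: R) A|.
  apply: subset_leq_card; apply/subsetP => p; rewrite in_setI inE => /andP[pI pl].
  apply/bigcapP => A /imsetP[T TR ->].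
  by rewrite /Lo in_set (bigcapP pI T TR) pl.
have L2 : #|I :\: low| <= #|\bigcap_(B in dn (2^k) @: R) B|.
  pose sh (p : pix) : pix :=
    (Ordinal (leq_ltn_trans (leq_subr (2^k) p.1) (ltn_ord p.1)), p.2).
  have shinj : {in I :\: low &, injective sh}.
    move=> p q; rewrite !in_setD !inE => /andP[pl _] /andP[ql _] e.
    have e1 := congr1 (fun x : pix => nat_of_ord x.1) e.
    have e2 := congr1 (fun x : pix => nat_of_ord x.2) e.
    simpl in e1, e2.
    rewrite -ltnNge in pl; rewrite -ltnNge in ql.
    apply: pix_eq => //; lia.
  rewrite -(card_in_imset shinj).
  apply: subset_leq_card; apply/subsetP => x /imsetP[p hp ->].
  move: hp; rewrite in_setD inE => /andP[pl pI].
  apply/bigcapP => B /imsetP[T TR ->].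
  apply/dnP; exists p; first exact: (bigcapP pI T TR).
  rewrite -ltnNge in pl.
  by split => //=; rewrite subnK.
case: (boolP [forall T1 in R, forall T2 in R, (Lo (2^k) T1 == Lo (2^k) T2) ==> (T1 == T2)]) => hL; last first.
  have [T1 T1R /forall_inPn [T2 T2R]] := forall_inPn hL.
  rewrite negb_imply => /andP[/eqP eL neq].
  have E : I :\: low = set0.
    apply/setP => p; rewrite in_set0 in_setD inE.
    apply/negbTE/andP => -[pl pI].
    rewrite -ltnNge in pl.
    have := caseB hk (subsetP sub _ T1R) (subsetP sub _ T2R) eL (bigcapP pI _ T1R) (bigcapP pI _ T2R) pl.
    by move/eqP; rewrite (negbTE neq).
  have cR : #|R| <= 2 * #|Lo (2^k) @: R| := card_fiber2 (injLo hk sub).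
  rewrite cI E cards0 addn0 expnS.
  apply: leq_trans (leq_mul cR L1) _.
  by rewrite -mulnA leq_mul2l IHL orbT.
case: (boolP [forall T1 in R, forall T2 in R, (dn (2^k) T1 == dn (2^k) T2) ==> (T1 == T2)]) => hD; last first.
  have [T1 T1R /forall_inPn [T2 T2R]] := forall_inPn hD.
  rewrite negb_imply => /andP[/eqP eD neq].
  have E : I :&: low = set0.
    apply/setP => p; rewrite in_set0 in_setI inE.
    apply/negbTE/andP => -[pI pl].
    have := caseC hk (subsetP sub _ T1R) (subsetP sub _ T2R) eD (bigcapP pI _ T1R) (bigcapP pI _ T2R) pl.
    by move/eqP; rewrite (negbTE neq).
  have cR : #|R| <= 2 * #|dn (2^k) @: R| := card_fiber2 (injDn hk sub).
  rewrite cI E cards0 add0n expnS.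
  apply: leq_trans (leq_mul cR L2) _.
  by rewrite -mulnA leq_mul2l IHD orbT.
have iL : {in R &, injective (Lo (2^k))}.
  move=> T1 T2 h1 h2 e; apply/eqP.
  by move: (forall_inP hL T1 h1) => /forall_inP/(_ T2 h2)/implyP; apply; apply/eqP.
have iD : {in R &, injective (dn (2^k))}.
  move=> T1 T2 h1 h2 e; apply/eqP.
  by move: (forall_inP hD T1 h1) => /forall_inP/(_ T2 h2)/implyP; apply; apply/eqP.
rewrite cI mulnDr expnS mul2n -addnn.
apply: leq_add.
  rewrite -(card_in_imset iL).
  exact: leq_trans (leq_mul (leqnn _) L1) IHL.
rewrite -(card_in_imset iD).
exact: leq_trans (leq_mul (leqnn _) L2) IHD.
Qed.

Lemma FHT_nz k : k <= d -> exists T, T \in FHT N w k.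
Proof.
elim: k => [|k IH] hk.
  by exists [set p : pix | (p.1 == 0 :> nat) && (p.2 == Ordinal w0)]; apply/imsetP; exists (Ordinal w0).
have [A AH] := IH (ltnW hk).
exists (A :|: tran (2^k) (Delta A + false) A).
by apply/imset2P; exists A false; rewrite ?inE.
Qed.

Lemma final : rself (Hhw d w) = 2 ^ d.
Proof.
apply/eqP; rewrite eqn_leq; apply/andP; split.
  apply/bigmax_leqP => R /andP[]; rewrite powersetE => sub nz.
  exact: main.
have [T0 T0H] := FHT_nz (leqnn d).
have [_ _ r3] := inv_FHT (leqnn d) T0H.
apply: (bigmax_sup [set T0]).
  rewrite powersetE sub1set T0H /=.
  by apply/set0Pn; exists T0; rewrite set11.
rewrite /Sarea big_set1 cards1 mul1n.
apply: leq_trans (leq_imset_card (fun p : pix => p.1) T0).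
have -> : [set (p : pix).1 | p in T0] = [set: 'I_N].
  apply/setP => i; rewrite inE.
  have [p pT pe] := r3 i (ltn_ord i).
  by apply/imsetP; exists p.
by rewrite cardsT card_ord.
Qed.

End Proof.

Unset Implicit Arguments.
Set Strict Implicit.

Theorem lemma1 (d w : nat) : 2 <= w -> rself (Hhw d w) = 2 ^ d.
Proof. by move=> w2; apply: final. Qed.
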